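(* Let $\mathcal{H}$ be a complex Hilbert space and let $R\in\mathbb{B}(\mathcal{H})$ be invertible (with bounded inverse). If $D(R)\le \|R^{-1}\|^{-2}$, then $\|R\|\le\sqrt{2}\,\omega(R)$.
   Context: $\mathbb{B}(\mathcal{H})$ denotes the bounded linear operators on $\mathcal{H}$. $\omega(R)=\sup\{|\langle Rx,x\rangle| : \|x\|=1\}$ is the numerical radius, $\|R\|$ the operator norm, and $D(R)=2\min(\|R_1\|^2,\|R_2\|^2)$ where $R_1=\frac{R+R^*}{2}$, $R_2=\frac{R-R^*}{2i}$. *)

(* Defs.v *)
From Stdlib Require Import Reals.
Open Scope R_scope.

Definition C : Type := (R * R)%type.
Definition Cre (z : C) : R := fst z.
Definition Cim (z : C) : R := snd z.
Definition C0 : C := (0, 0).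
Definition C1 : C := (1, 0).
Definition Ci : C := (0, 1).
Definition RtoC (r : R) : C := (r, 0).
Definition Cadd (z w : C) : C := (fst z + fst w, snd z + snd w).
Definition Cmul (z w : C) : C :=
  (fst z * fst w - snd z * snd w, fst z * snd w + snd z * fst w).
Definition Cconj (z : C) : C := (fst z, - snd z).
Definition Cmod (z : C) : R := sqrt (fst z ^ 2 + snd z ^ 2).
Definition Cinv (z : C) : C :=
  (fst z / (fst z ^ 2 + snd z ^ 2), - snd z / (fst z ^ 2 + snd z ^ 2)).

(** Complex inner product spaces.  Convention: the inner product is linear in
    the first argument and conjugate-linear in the second. *)
Record PreHilbert := {
  carrier :> Type;
  vzero : carrier;
  vadd : carrier -> carrier -> carrier;
  vopp : carrier -> carrier;
  vscal : C -> carrier -> carrier;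
  inner : carrier -> carrier -> C;
  vadd_assoc : forall x y z, vadd x (vadd y z) = vadd (vadd x y) z;
  vadd_comm : forall x y, vadd x y = vadd y x;
  vadd_0 : forall x, vadd x vzero = x;
  vadd_opp : forall x, vadd x (vopp x) = vzero;
  vscal_1 : forall x, vscal C1 x = x;
  vscal_assoc : forall a b x, vscal a (vscal b x) = vscal (Cmul a b) x;
  vscal_distr_v : forall a x y, vscal a (vadd x y) = vadd (vscal a x) (vscal a y);
  vscal_distr_s : forall a b x, vscal (Cadd a b) x = vadd (vscal a x) (vscal b x);
  inner_add_l : forall x y z, inner (vadd x y) z = Cadd (inner x z) (inner y z);
  inner_scal_l : forall a x y, inner (vscal a x) y = Cmul a (inner x y);
  inner_conj_sym : forall x y, inner y x = Cconj (inner x y);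
  inner_pos : forall x, 0 <= Cre (inner x x);
  inner_definite : forall x, inner x x = C0 -> x = vzero
}.

Arguments vzero {_}.
Arguments vadd {_} _ _.
Arguments vopp {_} _.
Arguments vscal {_} _ _.
Arguments inner {_} _ _.

Definition vnorm {H : PreHilbert} (x : H) : R := sqrt (Cre (inner x x)).
Definition vsub {H : PreHilbert} (x y : H) : H := vadd x (vopp y).

Definition complete (H : PreHilbert) : Prop :=
  forall u : nat -> H,
    (forall eps, eps > 0 -> exists N, forall m n, (m >= N)%nat -> (n >= N)%nat ->
        vnorm (vsub (u m) (u n)) < eps) ->
    exists l : H, forall eps, eps > 0 -> exists N, forall n, (n >= N)%nat ->
        vnorm (vsub (u n) l) < eps.

Definition is_linear {H : PreHilbert} (T : H -> H) : Prop :=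
  (forall x y, T (vadd x y) = vadd (T x) (T y)) /\
  (forall a x, T (vscal a x) = vscal a (T x)).

Definition is_bounded {H : PreHilbert} (T : H -> H) : Prop :=
  exists M : R, forall x, vnorm (T x) <= M * vnorm x.

Definition bounded_op {H : PreHilbert} (T : H -> H) : Prop :=
  is_linear T /\ is_bounded T.

Definition is_adjoint {H : PreHilbert} (T T' : H -> H) : Prop :=
  forall x y, inner (T x) y = inner x (T' y).

Definition is_opnorm {H : PreHilbert} (T : H -> H) (n : R) : Prop :=
  is_lub (fun r => exists x : H, vnorm x = 1 /\ r = vnorm (T x)) n.

Definition is_numrad {H : PreHilbert} (T : H -> H) (w : R) : Prop :=
  is_lub (fun r => exists x : H, vnorm x = 1 /\ r = Cmod (inner (T x) x)) w.

(** Cartesian decomposition: R1 = (R + adj R) / 2, R2 = (R - adj R) / (2i). *)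
Definition realpart {H : PreHilbert} (T Ts : H -> H) : H -> H :=
  fun x => vscal (RtoC (/ 2)) (vadd (T x) (Ts x)).
Definition imagpart {H : PreHilbert} (T Ts : H -> H) : H -> H :=
  fun x => vscal (Cinv (Cmul (RtoC 2) Ci)) (vsub (T x) (Ts x)).

(* Main.v *)
Require Import Defs.
From Stdlib Require Import Reals Lra.
Open Scope R_scope.

Section Lemmas.
Variable H : PreHilbert.

Lemma re_addl (x y z : H) : fst (inner (vadd x y) z) = fst (inner x z) + fst (inner y z).
Proof. rewrite inner_add_l. reflexivity. Qed.
Lemma im_addl (x y z : H) : snd (inner (vadd x y) z) = snd (inner x z) + snd (inner y z).
Proof. rewrite inner_add_l. reflexivity. Qed.
Lemma re_sym (x y : H) : fst (inner y x) = fst (inner x y).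
Proof. rewrite inner_conj_sym. reflexivity. Qed.
Lemma im_sym (x y : H) : snd (inner y x) = - snd (inner x y).
Proof. rewrite inner_conj_sym. reflexivity. Qed.
Lemma re_addr (x y z : H) : fst (inner z (vadd x y)) = fst (inner z x) + fst (inner z y).
Proof. rewrite (re_sym (vadd x y) z), re_addl, (re_sym z x), (re_sym z y). reflexivity. Qed.
Lemma im_addr (x y z : H) : snd (inner z (vadd x y)) = snd (inner z x) + snd (inner z y).
Proof. rewrite (im_sym (vadd x y) z), im_addl, (im_sym z x), (im_sym z y). ring. Qed.
Lemma re_scall a (x y : H) : fst (inner (vscal a x) y) = fst a * fst (inner x y) - snd a * snd (inner x y).
Proof. rewrite inner_scal_l. reflexivity. Qed.
Lemma im_scall a (x y : H) : snd (inner (vscal a x) y) = fst a * snd (inner x y) + snd a * fst (inner x y).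
Proof. rewrite inner_scal_l. reflexivity. Qed.
Lemma re_scalr a (x y : H) : fst (inner x (vscal a y)) = fst a * fst (inner x y) + snd a * snd (inner x y).
Proof. rewrite (re_sym (vscal a y) x), re_scall, (re_sym x y), (im_sym x y). ring. Qed.
Lemma im_scalr a (x y : H) : snd (inner x (vscal a y)) = fst a * snd (inner x y) - snd a * fst (inner x y).
Proof. rewrite (im_sym (vscal a y) x), im_scall, (re_sym x y), (im_sym x y). ring. Qed.
Lemma re_zerol (y : H) : fst (inner vzero y) = 0.
Proof. pose proof (re_addl vzero vzero y) as h. rewrite vadd_0 in h. lra. Qed.
Lemma im_zerol (y : H) : snd (inner vzero y) = 0.
Proof. pose proof (im_addl vzero vzero y) as h. rewrite vadd_0 in h. lra. Qed.
Lemma re_oppl (x y : H) : fst (inner (vopp x) y) = - fst (inner x y).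
Proof. pose proof (re_addl x (vopp x) y) as h. rewrite vadd_opp, re_zerol in h. lra. Qed.
Lemma im_oppl (x y : H) : snd (inner (vopp x) y) = - snd (inner x y).
Proof. pose proof (im_addl x (vopp x) y) as h. rewrite vadd_opp, im_zerol in h. lra. Qed.
Lemma re_oppr (x y : H) : fst (inner y (vopp x)) = - fst (inner y x).
Proof. rewrite (re_sym (vopp x) y), re_oppl, (re_sym y x). ring. Qed.
Lemma im_oppr (x y : H) : snd (inner y (vopp x)) = - snd (inner y x).
Proof. rewrite (im_sym (vopp x) y), im_oppl, (im_sym y x). ring. Qed.

Ltac expand := repeat (rewrite ?re_addl, ?im_addl, ?re_addr, ?im_addr, ?re_scall,
  ?im_scall, ?re_scalr, ?im_scalr, ?re_oppl, ?im_oppl, ?re_oppr, ?im_oppr); cbn [fst snd].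

Lemma abs_le1 x c : Rabs x <= c -> -c <= x <= c.
Proof. unfold Rabs; destruct Rcase_abs; lra. Qed.
Lemma abs_le2 x c : -c <= x <= c -> Rabs x <= c.
Proof. unfold Rabs; destruct Rcase_abs; lra. Qed.

Lemma L1 a w : 0 <= a -> 0 <= w -> (forall t, 2*t*a <= w*(1 + t^2*a)) -> a <= w^2.
Proof.
  intros ha hw h. destruct (Req_dec w 0) as [e|ne].
  - subst. specialize (h 1). nra.
  - assert (wp : 0 < w) by lra. specialize (h (/w)).
    assert (h2 : 2*(/w)*a*w <= w*(1+(/w)^2*a)*w) by (apply Rmult_le_compat_r; lra).
    replace (2*(/w)*a*w) with (2*a) in h2 by (field; lra).
    replace (w*(1+(/w)^2*a)*w) with (w^2 + a) in h2 by (field; lra). lra.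
Qed.

Lemma L2 B c : 0 <= B -> (forall s, 0 < s -> 2*s <= s^2*B + c) -> 0 < B /\ / B <= c.
Proof.
  intros hB h. destruct (Req_dec B 0) as [e|ne].
  - subst. exfalso. specialize (h (Rabs c + 1)). pose proof (Rle_abs c).
    pose proof (Rabs_pos c). assert (hp : 0 < Rabs c + 1) by lra. specialize (h hp). nra.
  - assert (bp : 0 < B) by lra. split; auto. specialize (h (/B) (Rinv_0_lt_compat _ bp)).
    replace ((/B)^2*B) with (/B) in h by (field; lra). lra.
Qed.

Lemma cmod_re c : Rabs (fst c) <= Cmod c.
Proof.
  unfold Cmod. pose proof (sqrt_pos (fst c ^ 2 + snd c ^ 2)).
  pose proof (sqrt_sqrt (fst c ^ 2 + snd c ^ 2)). apply abs_le2. nra.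
Qed.
Lemma cmod_im c : Rabs (snd c) <= Cmod c.
Proof.
  unfold Cmod. pose proof (sqrt_pos (fst c ^ 2 + snd c ^ 2)).
  pose proof (sqrt_sqrt (fst c ^ 2 + snd c ^ 2)). apply abs_le2. nra.
Qed.

Lemma norm2 (x : H) : 0 <= fst (inner x x). Proof. apply inner_pos. Qed.

Lemma unit_iff (x : H) : vnorm x = 1 -> fst (inner x x) = 1.
Proof.
  unfold vnorm, Cre. intro h. pose proof (sqrt_sqrt _ (norm2 x)) as h'. rewrite h in h'. lra.
Qed.

Lemma opnorm_bound (T : H -> H) n : is_opnorm T n -> forall x, vnorm x = 1 ->
  fst (inner (T x) (T x)) <= n ^ 2.
Proof.
  intros [ub _] x hx. assert (h := ub _ (ex_intro _ x (conj hx eq_refl))).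
  unfold vnorm, Cre in h. pose proof (sqrt_sqrt _ (norm2 (T x))).
  pose proof (sqrt_pos (fst (inner (T x) (T x)))). nra.
Qed.

Lemma numrad_bound (A : H -> H) w : is_linear A -> is_numrad A w -> forall z,
  Rabs (fst (inner (A z) z)) <= w * fst (inner z z) /\
  Rabs (snd (inner (A z) z)) <= w * fst (inner z z).
Proof.
  intros lin [ub _] z. pose proof (norm2 z) as nz.
  destruct (Req_dec (fst (inner z z)) 0) as [e|ne].
  - assert (hz : z = vzero).
    { apply inner_definite. pose proof (im_sym z z).
      destruct (inner z z) as [p q]; cbn in *; unfold C0; f_equal; lra. }
    subst z. rewrite (re_sym vzero (A vzero)), (im_sym vzero (A vzero)), re_zerol, im_zerol, e.
    split; apply abs_le2; lra.
  - set (n := fst (inner z z)) in *. assert (np : 0 < n) by lra.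
    set (r := sqrt n). assert (rp : 0 < r) by (apply sqrt_lt_R0; lra).
    assert (rr : r * r = n) by (apply sqrt_sqrt; lra).
    set (u := vscal (/r, 0) z).
    assert (hu : vnorm u = 1).
    { unfold vnorm, Cre, u. expand. fold n. replace (/r * (/r * n + 0 * snd (inner z z)) -
        0 * (/ r * snd (inner z z) - 0 * n)) with 1. apply sqrt_1.
      rewrite <- rr. field. lra. }
    assert (h := ub _ (ex_intro _ u (conj hu eq_refl))).
    pose proof (cmod_re (inner (A u) u)) as c1. pose proof (cmod_im (inner (A u) u)) as c2.
    unfold u in *. rewrite (proj2 lin) in *. revert c1 c2. expand. intros h1 h2.
    apply abs_le1 in h1. apply abs_le1 in h2.
    set (F := fst (inner (A z) z)) in *. set (G := snd (inner (A z) z)) in *.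
    assert (e1 : / r * (/ r * F + 0 * G) - 0 * (/ r * G - 0 * F) = F / n)
      by (rewrite <- rr; field; lra).
    assert (e2 : / r * (/ r * G - 0 * F) + 0 * (/ r * F + 0 * G) = G / n)
      by (rewrite <- rr; field; lra).
    rewrite e1 in h1. rewrite e2 in h2.
    replace F with ((F/n)*n) by (field; lra). replace G with ((G/n)*n) by (field; lra).
    split; apply abs_le2; nra.
Qed.


Lemma polar_bound (A : H -> H) w : is_linear A -> is_numrad A w -> forall x y,
  Rabs (2 * fst (inner (A x) y) + 2 * fst (inner (A y) x)) <= w * (2 * fst (inner x x) + 2 * fst (inner y y)) /\
  Rabs (2 * snd (inner (A x) y) + 2 * snd (inner (A y) x)) <= w * (2 * fst (inner x x) + 2 * fst (inner y y)).
Proof.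
  intros lin hw x y.
  destruct (numrad_bound A w lin hw (vadd x y)) as [a1 a2].
  destruct (numrad_bound A w lin hw (vadd x (vscal (-1, 0) y))) as [b1 b2].
  rewrite !(proj1 lin), !(proj2 lin) in *.
  revert a1 a2 b1 b2. expand. intros a1 a2 b1 b2.
  apply abs_le1 in a1; apply abs_le1 in a2; apply abs_le1 in b1; apply abs_le1 in b2.
  split; apply abs_le2; lra.
Qed.

Lemma part_bound (S : H -> H) (f : H -> H -> R) w : 0 <= w ->
  (forall x y, 4 * fst (inner (S x) y) = 2 * f x y + 2 * f y x) ->
  (forall x y, Rabs (2 * f x y + 2 * f y x) <= w * (2 * fst (inner x x) + 2 * fst (inner y y))) ->
  forall x, fst (inner x x) = 1 -> fst (inner (S x) (S x)) <= w ^ 2.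
Proof.
  intros hw hS hf x hx. apply L1; auto. apply norm2. intro t.
  set (y := vscal (t, 0) (S x)).
  pose proof (hS x y) as e. pose proof (hf x y) as b. rewrite <- e, hx in b.
  apply abs_le1 in b. unfold y in b. revert b. expand. intro b. nra.
Qed.

Lemma realpart_eq (A As : H -> H) : is_adjoint A As -> forall x y,
  4 * fst (inner (realpart A As x) y) = 2 * fst (inner (A x) y) + 2 * fst (inner (A y) x).
Proof.
  intros adj x y. unfold realpart, RtoC. expand.
  rewrite (re_sym y (As x)), <- adj. lra.
Qed.

Lemma cinv_eq : Cinv (Cmul (RtoC 2) Ci) = (0, - / 2).
Proof. unfold Cinv, Cmul, RtoC, Ci. cbn [fst snd]. f_equal; field. Qed.

Lemma imagpart_eq (A As : H -> H) : is_adjoint A As -> forall x y,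
  4 * fst (inner (imagpart A As x) y) = 2 * snd (inner (A x) y) + 2 * snd (inner (A y) x).
Proof.
  intros adj x y. unfold imagpart, vsub. rewrite cinv_eq. expand.
  rewrite (im_sym y (As x)), <- adj. lra.
Qed.

Lemma key_id (A As : H -> H) x :
  fst (inner (A x) (A x)) + fst (inner (As x) (As x)) =
  2 * fst (inner (realpart A As x) (realpart A As x)) + 2 * fst (inner (imagpart A As x) (imagpart A As x)).
Proof. unfold realpart, imagpart, vsub. rewrite cinv_eq. unfold RtoC. expand. lra. Qed.

Lemma lower_bound (A As Ainv : H -> H) nAinv : is_adjoint A As ->
  (forall x, A (Ainv x) = x) -> is_opnorm Ainv nAinv -> forall x, vnorm x = 1 ->
  0 < nAinv ^ 2 /\ / (nAinv ^ 2) <= fst (inner (As x) (As x)).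
Proof.
  intros adj hAA hn x hx. pose proof (unit_iff x hx) as h1.
  pose proof (opnorm_bound Ainv nAinv hn x hx) as hb.
  assert (e : fst (inner (Ainv x) (As x)) = 1).
  { rewrite <- adj, hAA. exact h1. }
  apply L2. apply pow2_ge_0. intros s sp.
  pose proof (norm2 (vadd (vscal (s, 0) (Ainv x)) (vscal (-1, 0) (As x)))) as p.
  revert p. expand. rewrite (re_sym (Ainv x) (As x)). intro p. nra.
Qed.

End Lemmas.

Theorem corollary2p3 (H : PreHilbert) (Hcomplete : complete H)
  (A As Ainv : H -> H)
  (nA nAinv nA1 nA2 w : R) :
  bounded_op A ->
  is_adjoint A As ->
  bounded_op Ainv ->
  (forall x, Ainv (A x) = x) ->
  (forall x, A (Ainv x) = x) ->
  is_opnorm A nA ->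
  is_opnorm Ainv nAinv ->
  is_opnorm (realpart A As) nA1 ->
  is_opnorm (imagpart A As) nA2 ->
  is_numrad A w ->
  2 * Rmin (nA1 ^ 2) (nA2 ^ 2) <= / (nAinv ^ 2) ->
  nA <= sqrt 2 * w.
Proof.
  intros [linA _] adj _ _ hAA hnA hnAinv hn1 hn2 hw hD.
  apply (proj2 hnA). intros r [x [hx ->]].
  pose proof (unit_iff H x hx) as h1.
  assert (w0 : 0 <= w).
  { pose proof (Rabs_pos (fst (inner (A x) x))).
    pose proof (cmod_re (inner (A x) x)).
    pose proof ((proj1 hw) _ (ex_intro _ x (conj hx eq_refl))). lra. }
  destruct (lower_bound H A As Ainv nAinv adj hAA hnAinv x hx) as [_ lb].
  pose proof (key_id H A As x) as k.
  pose proof (opnorm_bound H _ _ hn1 x hx) as b1.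
  pose proof (opnorm_bound H _ _ hn2 x hx) as b2.
  pose proof (part_bound H (realpart A As) (fun x y => fst (inner (A x) y)) w w0
    (realpart_eq H A As adj) (fun x y => proj1 (polar_bound H A w linA hw x y)) x h1) as c1.
  pose proof (part_bound H (imagpart A As) (fun x y => snd (inner (A x) y)) w w0
    (imagpart_eq H A As adj) (fun x y => proj2 (polar_bound H A w linA hw x y)) x h1) as c2.
  assert (main : fst (inner (A x) (A x)) <= 2 * w ^ 2).
  { destruct (Rle_dec (nA1 ^ 2) (nA2 ^ 2)) as [l|l].
    - rewrite Rmin_left in hD by lra. lra.
    - rewrite Rmin_right in hD by lra. lra. }
  unfold vnorm, Cre. rewrite <- (sqrt_pow2 w w0), <- sqrt_mult_alt by lra.
  apply sqrt_le_1_alt. lra.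
Qed.
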